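(* Let $k\ge 1$ and let $G$ be a $k$-degenerate graph. Define a sequence of edge sets as follows. Set $\Lambda_0=\emptyset$. For $i \ge 1$, let $G_i$ be the graph formed by the edges of $E(G)\setminus(\Lambda_0\cup\dots\cup\Lambda_{i-1})$ (with their endpoints), and let $\deg_i(v)$ denote the degree of $v$ in $G_i$. If $G_i$ has at least one edge, choose a vertex $w_i$ of $G_i$ such that at least $\max\{1,\deg_i(w_i)-k\}$ of its neighbors in $G_i$ have $\deg_i \le k$ (such a vertex always exists), and set $\Lambda_i=\{w_iv : w_iv\in E(G_i),\ \deg_i(v)\le k\}$; the vertex $w_i$ is called the center of $\Lambda_i$. The process stops at the first $m$ for which $G_{m+1}$ has no edges. Then for all $1\le i<j\le m$, the centers $w_i$ and $w_j$ are distinct.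
   Context: All graphs are finite and simple. A graph is $k$-degenerate if every subgraph of it has a vertex of degree at most $k$. *)

(* Defs.v *)
(* A simple graph on vertex set T is a symmetric irreflexive e : rel T. *)
From mathcomp Require Import all_boot.
Set Implicit Arguments. Unset Strict Implicit. Unset Printing Implicit Defensive.

Section Degeneracy.
Variable T : finType.

Definition deg (E : rel T) (v : T) : nat := #|[set u | E v u]|.

(* G is k-degenerate: every (nonempty) subgraph (A, f), with f a symmetric
   sub-relation of e on A, has a vertex of degree at most k. *)
Definition degenerate (k : nat) (e : rel T) : Prop :=
  forall (A : {set T}) (f : rel T),
    A != set0 -> symmetric f -> (forall x y, f x y -> e x y) ->
    exists2 v, v \in A & #|[set u in A | f v u]| <= k.

Definition has_edge (E : rel T) : bool := [exists x, exists y, E x y].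

(* E with Lambda = { w v : E w v, deg_E v <= k } removed *)
Definition step (k : nat) (E : rel T) (w : T) : rel T :=
  fun x y => E x y &&
    ~~ (((x == w) && (deg E y <= k)) || ((y == w) && (deg E x <= k))).

Definition valid_center (k : nat) (E : rel T) (w : T) : bool :=
  has_edge E &&
  (maxn 1 (deg E w - k) <= #|[set v | E w v && (deg E v <= k)]|).

(* ws = [:: w_1; ...; w_m] is a complete run of the process starting from E:
   each w_i is a valid center of G_i, and G_(m+1) has no edges. *)
Fixpoint valid_run (k : nat) (E : rel T) (ws : seq T) : bool :=
  match ws with
  | [::] => ~~ has_edge E
  | w :: ws' => valid_center k E w && valid_run k (step k E w) ws'
  end.

End Degeneracy.

(* Main.v *)
Require Import Defs.
From mathcomp Require Import all_boot.
From mathcomp Require Import zify.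

Section Aux.
Variable T : finType.
Implicit Types (E : rel T) (u v w : T).

Lemma step_sub {k E u x y} : step k E u x y -> E x y.
Proof. by case/andP. Qed.

Lemma keep_deg k E u v : v != u -> k < deg E v -> deg (step k E u) v = deg E v.
Proof.
move=> vu hv; rewrite /deg; apply: eq_card => y; rewrite !inE /step (negbTE vu) /=.
by rewrite leqNgt hv andbF andbT.
Qed.

Definition Pw k E w := (deg E w <= k) /\ (forall v, E w v -> k < deg E v).

Lemma deg_step_le k E u w : deg (step k E u) w <= deg E w.
Proof.
apply: subset_leq_card; apply/subsetP => y; rewrite !inE; exact: step_sub.
Qed.

Lemma P_other {k E u w} : Pw k E w -> u != w -> Pw k (step k E u) w.
Proof.
move=> [hd hn] uw; split; first exact: leq_trans (deg_step_le _ _ _ _) hd.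
move=> v hs; have hE := step_sub hs; have hv := hn v hE.
have vu : v != u.
  apply/negP => /eqP vu; move: hs; rewrite /step hE vu eqxx hd /=.
  by rewrite orbT.
by rewrite keep_deg.
Qed.

Lemma P_self {k E w} : irreflexive E -> valid_center k E w -> Pw k (step k E w) w.
Proof.
move=> irr /andP [_ hv]; split.
  set L := [set v | E w v && (deg E v <= k)].
  have sub : [set y | step k E w w y] \subset [set y | E w y] :\: L.
    apply/subsetP => y; rewrite !inE /step eqxx /= => /andP [-> h].
    by move: h; rewrite negb_or => /andP [-> _].
  have LA : L \subset [set y | E w y] by apply/subsetP => y; rewrite !inE => /andP [].
  have := subset_leq_card sub; rewrite cardsD (setIidPr LA) /deg.
  move: hv; rewrite /deg -/L; lia.
move=> v hs; have hE := step_sub hs.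
have hv' : k < deg E v.
  by move: hs; rewrite /step eqxx /= ltnNge; case: (deg E v <= k); rewrite /= ?andbF.
have vw : v != w by apply/negP => /eqP vw; move: hE; rewrite vw irr.
by rewrite keep_deg.
Qed.

Lemma P_notvalid {k E w} : Pw k E w -> ~~ valid_center k E w.
Proof.
move=> [_ hn]; apply/negP => /andP [_ hv].
have : 0 < #|[set v | E w v && (deg E v <= k)]| by apply: leq_trans hv; rewrite leq_max.
case/card_gt0P => v; rewrite inE => /andP [hE hd].
by move: (hn v hE); rewrite ltnNge hd.
Qed.

Lemma notin_run k E w ws : irreflexive E -> Pw k E w -> valid_run k E ws -> w \notin ws.
Proof.
elim: ws E => [//|u ws IH] E irr hP /= /andP [hc hr].
have uw : u != w by apply/negP => /eqP uw; move: hc; rewrite uw (negbTE (P_notvalid hP)).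
rewrite in_cons negb_or eq_sym uw /=.
apply: IH hr; last exact: P_other.
by move=> x; apply/negP => /step_sub; rewrite irr.
Qed.

Lemma run_uniq k E ws : irreflexive E -> valid_run k E ws -> uniq ws.
Proof.
elim: ws E => [//|w ws IH] E irr /= /andP [hc hr].
have irr' : irreflexive (step k E w) by move=> x; apply/negP => /step_sub; rewrite irr.
rewrite (IH _ irr' hr) andbT.
exact: notin_run irr' (P_self irr hc) hr.
Qed.
End Aux.

Theorem mainTheorem3 (T : finType) (e : rel T) (k : nat) (ws : seq T) :
  1 <= k -> symmetric e -> irreflexive e -> degenerate k e ->
  valid_run k e ws -> uniq ws.
Proof.
move=> _ _ irr _; exact: run_uniq.
Qed.
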